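(* Consider the family of binary symmetric channels with crossover probability $\theta\in[0,1]$, so that $P_\theta(\mathbf y|\mathbf x)=\theta^{d(\mathbf x,\mathbf y)}(1-\theta)^{N-d(\mathbf x,\mathbf y)}$ for $\mathbf x,\mathbf y\in\{0,1\}^N$. Fix $\xi\in[0,1]$ and let $f(\mathbf x,\mathbf y)=\max_{0\le\theta\le1}\left[\frac1N\ln P_\theta(\mathbf y|\mathbf x)+\xi E_r^*(\theta)\right]$, and $\rho(\mathbf x,\mathbf y)=\min\{\delta(\mathbf x,\mathbf y),1-\delta(\mathbf x,\mathbf y)\}$. Then for every $\mathbf y\in\{0,1\}^N$ and all $\mathbf x_1,\mathbf x_2\in\{0,1\}^N$, $f(\mathbf x_1,\mathbf y)\ge f(\mathbf x_2,\mathbf y)$ if and only if $\rho(\mathbf x_1,\mathbf y)\le\rho(\mathbf x_2,\mathbf y)$. Consequently, the minimax decision rule (choose the codeword maximizing $f$) is equivalent to the rule choosing the codeword minimizing $\rho$.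
   Context: $d(\mathbf x,\mathbf y)$ is the Hamming distance and $\delta(\mathbf x,\mathbf y)=d(\mathbf x,\mathbf y)/N$. $E_r^*(\theta)=\max_{0\le\rho\le1}\{\rho\ln2-(1+\rho)\ln[(1-\theta)^{1/(1+\rho)}+\theta^{1/(1+\rho)}]-\rho R\}$ is the random coding error exponent of ML decoding for the BSC at rate $R$ (symmetric about $\theta=1/2$). *)

(* Defs.v *)
From HB Require Import structures.
From mathcomp Require Import all_boot all_order all_algebra.
From mathcomp Require Import all_classical all_reals all_analysis.
Set Implicit Arguments. Unset Strict Implicit. Unset Printing Implicit Defensive.
Import Order.TTheory GRing.Theory Num.Theory.
Local Open Scope classical_set_scope.
Local Open Scope ring_scope.

Section BSC.
Variable R : realType.

Definition word (N : nat) := {ffun 'I_N -> bool}.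

Definition hamming (N : nat) (x y : word N) : nat := #|[set i | x i != y i]|.

Definition reldist (N : nat) (x y : word N) : R := (hamming x y)%:R / N%:R.

Definition Pbsc (N : nat) (theta : R) (x y : word N) : R :=
  theta ^+ hamming x y * (1 - theta) ^+ (N - hamming x y).

Definition lnE (p : R) : \bar R := if p == 0 then -oo%E else (ln p)%:E.

Definition Er (Rt theta : R) : R :=
  sup [set rho * ln 2 - (1 + rho) * ln ((1 - theta) `^ (1 + rho)^-1 + theta `^ (1 + rho)^-1)
           - rho * Rt | rho in `[0, 1]].

Definition fmm (N : nat) (xi Rt : R) (x y : word N) : \bar R :=
  ereal_sup [set (lnE (Pbsc theta x y) * (N%:R^-1)%:E + (xi * Er Rt theta)%:E)%E
            | theta in `[0, 1]].

Definition rhodist (N : nat) (x y : word N) : R :=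
  Num.min (reldist x y) (1 - reldist x y).

End BSC.

(* Main.v *)
Require Import Defs.
From HB Require Import structures.
From mathcomp Require Import all_boot all_order all_algebra.
From mathcomp Require Import all_classical all_reals all_analysis.
From mathcomp Require Import ring lra zify.
Import Order.TTheory GRing.Theory Num.Theory.
Local Open Scope classical_set_scope.
Local Open Scope ring_scope.
Set Implicit Arguments. Unset Strict Implicit.

Lemma concave_pow {R : realType} (s l u v : R) : 0 < s <= 1 -> 0 <= l <= 1 -> 0 <= u -> 0 <= v ->
  l * u `^ s + (1 - l) * v `^ s <= (l * u + (1 - l) * v) `^ s.
Proof.
move=> /andP[s0 s1] /andP[l0 l1] u0 v0.
have p1 : 1 <= s^-1 by rewrite invf_ge1.
have := @convex_powR R _ p1 (Itv01 l0 l1) (u `^ s) (v `^ s).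
rewrite !inE /= !in_itv /= !andbT !powR_ge0 => /(_ isT isT).
rewrite convRE /= /unstable.onem => H.
have s0' : s != 0 by rewrite gt_eqF.
move: H; rewrite [conv _ _ _](@convRE R) /= /unstable.onem -!powRrM !mulfV // !powRr1 // => H.
set X := (X in X <= _).
have X0 : 0 <= X by rewrite addr_ge0 // mulr_ge0 ?powR_ge0 ?subr_ge0.
have -> : X = (X `^ s^-1) `^ s by rewrite -powRrM mulVf // powRr1.
apply: ge0_ler_powR; [exact: ltW | | | exact: H].
- by rewrite nnegrE powR_ge0.
- by rewrite nnegrE addr_ge0 // mulr_ge0 // subr_ge0.
Qed.

Lemma karamata {R : realType} (s a b : R) : 0 < s <= 1 -> 0 <= a -> a <= b -> b <= 2^-1 ->
  a `^ s + (1 - a) `^ s <= b `^ s + (1 - b) `^ s.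
Proof.
move=> hs a0 ab b2.
have [->|ab'] := eqVneq a b; first by [].
have altb : a < b by rewrite lt_neqAle ab' ab.
have d0 : 0 < 1 - 2 * a by lra.
set l := (1 - a - b) / (1 - 2 * a).
have l0 : 0 <= l by rewrite divr_ge0 ?ltW //; lra.
have l1 : l <= 1 by rewrite ler_pdivrMr // mul1r; lra.
have hb : b = l * a + (1 - l) * (1 - a).
  rewrite /l; field; lra.
have hb' : 1 - b = l * (1 - a) + (1 - l) * a.
  rewrite /l; field; lra.
have a1 : 0 <= 1 - a by lra.
have l01 : 0 <= l <= 1 by rewrite l0 l1.
have := concave_pow hs l01 a0 a1.
have := concave_pow hs l01 a1 a0.
rewrite -hb -hb'. lra.
Qed.

Definition eterm {R : realType} (Rt theta rho : R) : R :=
  rho * ln 2 - (1 + rho) * ln ((1 - theta) `^ (1 + rho)^-1 + theta `^ (1 + rho)^-1) - rho * Rt.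

Lemma ErE {R : realType} (Rt theta : R) : Er Rt theta = sup [set eterm Rt theta rho | rho in `[0, 1]].
Proof. by []. Qed.

Lemma pow_ge_self {R : realType} (s x : R) : 0 < s <= 1 -> 0 <= x <= 1 -> x <= x `^ s.
Proof.
move=> /andP[s0 s1] /andP[x0 x1].
have [->|x0'] := eqVneq x 0; first by rewrite powR_ge0.
apply: ger1_powR => //; rewrite x1 andbT lt_neqAle eq_sym x0' x0 //.
Qed.

Lemma g_ge1 {R : realType} (s x : R) : 0 < s <= 1 -> 0 <= x <= 1 ->
  1 <= (1 - x) `^ s + x `^ s.
Proof.
move=> hs /andP[x0 x1].
have := pow_ge_self hs (_ : 0 <= x <= 1); rewrite x0 x1 => /(_ isT) h1.
have : 0 <= 1 - x <= 1 by apply/andP; split; lra.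
move=> /(pow_ge_self hs) h2. lra.
Qed.

Lemma s_of_rho {R : realType} (rho : R) : 0 <= rho -> 0 < (1 + rho)^-1 <= 1.
Proof.
move=> r0; have h : 0 < 1 + rho by lra.
rewrite invr_gt0 h /= invf_le1 //; lra.
Qed.

Lemma eterm_le {R : realType} (Rt theta rho : R) : 0 <= Rt -> 0 <= theta <= 1 -> 0 <= rho <= 1 ->
  eterm Rt theta rho <= ln 2.
Proof.
move=> R0 ht /andP[r0 r1]; rewrite /eterm.
have := g_ge1 (s_of_rho r0) ht => /ln_ge0 h.
have h2 : 0 <= ln (2 : R) by apply: ln_ge0; lra.
have : 0 <= (1 + rho) * ln ((1 - theta) `^ (1 + rho)^-1 + theta `^ (1 + rho)^-1).
  by apply: mulr_ge0 => //; lra.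
have : 0 <= rho * Rt by apply: mulr_ge0.
have : rho * ln 2 <= ln (2:R) by rewrite ler_piMl.
lra.
Qed.

Lemma Er_has_sup {R : realType} (Rt theta : R) : 0 <= Rt -> 0 <= theta <= 1 ->
  has_sup [set eterm Rt theta rho | rho in `[(0:R), 1]].
Proof.
move=> R0 ht; split.
  exists (eterm Rt theta 0), 0 => //=; rewrite in_itv /=; lra.
exists (ln 2) => _ [r hr <-]; apply: eterm_le => //.
Qed.

Lemma Er_le {R : realType} (Rt theta : R) : 0 <= Rt -> 0 <= theta <= 1 -> Er Rt theta <= ln 2.
Proof.
move=> R0 ht; rewrite ErE; apply: ge_sup.
  exists (eterm Rt theta 0), 0 => //=; rewrite in_itv /=; lra.
move=> _ [r hr <-]; apply: eterm_le => //.
Qed.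

Lemma Er_sym {R : realType} (Rt theta : R) : Er Rt (1 - theta) = Er Rt theta.
Proof.
rewrite !ErE; congr sup; apply: eq_imagel => r _.
by rewrite /eterm subKr [_ + theta `^ _]addrC.
Qed.

Lemma Er_mono {R : realType} (Rt a b : R) : 0 <= Rt -> 0 <= a -> a <= b -> b <= 2^-1 ->
  Er Rt b <= Er Rt a.
Proof.
move=> R0 a0 ab b2.
have ha : 0 <= a <= 1 by apply/andP; split; lra.
have hb : 0 <= b <= 1 by apply/andP; split; lra.
rewrite !ErE; apply: ge_sup.
  exists (eterm Rt b 0), 0 => //=; rewrite in_itv /=; lra.
move=> _ [r hr <-].
apply: le_trans (sup_upper_bound (Er_has_sup R0 ha) _); last by exists r.
move: hr; rewrite /= in_itv /= => /andP[r0 r1].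
rewrite /eterm.
have hs := s_of_rho r0.
have k := karamata hs a0 ab b2.
have g1 := g_ge1 hs ha.
have : ln ((1 - a) `^ (1 + r)^-1 + a `^ (1 + r)^-1) <= ln ((1 - b) `^ (1 + r)^-1 + b `^ (1 + r)^-1).
  rewrite ler_ln ?posrE; first by lra.
  - lra.
  - lra.
move=> hl.
have : (1 + r) * ln ((1 - a) `^ (1 + r)^-1 + a `^ (1 + r)^-1) <= (1 + r) * ln ((1 - b) `^ (1 + r)^-1 + b `^ (1 + r)^-1).
  by rewrite ler_pM2l //; lra.
lra.
Qed.

Definition Pd {R : realType} (N d : nat) (t : R) : R := t ^+ d * (1 - t) ^+ (N - d).

Lemma Pd_ge0 {R : realType} N d (t : R) : 0 <= t <= 1 -> 0 <= Pd N d t.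
Proof. move=> /andP[t0 t1]; rewrite /Pd mulr_ge0 // exprn_ge0 //; lra. Qed.

Lemma Pd_le1 {R : realType} N d (t : R) : 0 <= t <= 1 -> Pd N d t <= 1.
Proof.
move=> /andP[t0 t1]; rewrite /Pd mulr_ile1 ?exprn_ge0 ?exprn_ile1 //; lra.
Qed.

Lemma Pd_sym {R : realType} N d (t : R) : (d <= N)%N -> Pd N d t = Pd N (N - d) (1 - t).
Proof. by move=> dN; rewrite /Pd subKn // subKr mulrC. Qed.

Lemma Pd_refl {R : realType} N d (t : R) : (d + d <= N)%N -> 2^-1 <= t <= 1 ->
  Pd N d t <= Pd N d (1 - t).
Proof.
move=> h /andP[t0 t1]; rewrite /Pd subKr.
have -> : (N - d = d + (N - d - d))%N by rewrite subnKC // leq_subRL //; lia.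
rewrite !exprD.
have e1 : 0 <= t ^+ d by rewrite exprn_ge0 //; lra.
have e2 : 0 <= (1 - t) ^+ d by rewrite exprn_ge0 //; lra.
set A := t ^+ d in e1 *; set B := (1 - t) ^+ d in e2 *.
rewrite mulrA [X in _ <= X]mulrA (mulrC B).
apply: ler_wpM2l; first by rewrite mulr_ge0.
apply: lerXn2r; rewrite ?nnegrE; lra.
Qed.

Lemma Pd_margin {R : realType} N d d' (t s : R) : (d <= d')%N -> (d' <= N)%N ->
  0 <= t -> t <= s -> s < 1 ->
  Pd N d' t <= (s / (1 - s)) ^+ (d' - d) * Pd N d t.
Proof.
move=> dd dN t0 ts s1; rewrite /Pd.
have -> : d' = (d + (d' - d))%N by rewrite subnKC.
have -> : (N - d = (N - (d + (d' - d))) + (d' - d))%N by rewrite subnKC //; lia.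
rewrite !exprD.
have h : t <= s / (1 - s) * (1 - t).
  rewrite mulrAC ler_pdivlMr; last by lra.
  nra.
have h2 : t ^+ (d' - d) <= (s / (1 - s) * (1 - t)) ^+ (d' - d).
  by apply: lerXn2r => //; rewrite nnegrE //; apply: le_trans h.
rewrite exprMn in h2.
have e1 : 0 <= t ^+ d by rewrite exprn_ge0.
have e2 : 0 <= (1 - t) ^+ (N - (d + (d' - d))) by rewrite exprn_ge0 //; lra.
set A := t ^+ d in e1 *; set B := (1 - t) ^+ (N - (d + (d' - d))) in e2 *.
set C := t ^+ (d' - d) in h2 *; set D := (1 - t) ^+ (d' - d) in h2 *.
set K := (s / (1 - s)) ^+ (d' - d) in h2 *.
have -> : A * C * B = (A * B) * C by ring.
rewrite addKn -/K.
have -> : K * (A * (B * D)) = (A * B) * (K * D) by ring.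
by apply: ler_wpM2l => //; rewrite mulr_ge0.
Qed.
Lemma key {R : realType} (D M a b u v : R) : 0 <= D -> 0 < M -> 0 < a -> a < 1 -> a < b ->
  a * u <= b - a -> (1 - a) * v < a - b -> D * (1 - a) <= M * a -> D * u + M * v < 0.
Proof.
move=> D0 M0 a0 a1 ab h1 h2 h3.
have p : 0 < a * (1 - a) by apply: mulr_gt0; lra.
have e1 : D * (1 - a) * (a * u) <= D * (1 - a) * (b - a).
  by apply: ler_wpM2l => //; apply: mulr_ge0 => //; lra.
have e2 : M * a * ((1 - a) * v) < M * a * (a - b).
  by rewrite ltr_pM2l //; apply: mulr_gt0.
have e3 : (b - a) * (D * (1 - a)) <= (b - a) * (M * a).
  by apply: ler_wpM2l => //; lra.
have : a * (1 - a) * (D * u + M * v) < 0.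
  have -> : a * (1 - a) * (D * u + M * v) = D * (1 - a) * (a * u) + M * a * ((1 - a) * v) by ring.
  have E : D * (1 - a) * (b - a) + M * a * (a - b) = (b - a) * (D * (1 - a)) - (b - a) * (M * a) by ring.
  lra.
by rewrite pmulr_rlt0.
Qed.

Lemma ln_le_sub1 {R : realType} (x : R) : 0 < x -> ln x <= x - 1.
Proof. move=> x0; have := expR_ge1Dx (ln x); rewrite lnK //; lra. Qed.

Lemma ln_lt_sub1 {R : realType} (x : R) : 0 < x -> x != 1 -> ln x < x - 1.
Proof.
move=> x0 x1; have : ln x != 0 by rewrite ln_eq0.
move=> /expR_gt1Dx; rewrite lnK //; lra.
Qed.

Lemma Pd_gt0 {R : realType} N d (a : R) : (d < N)%N -> d%:R / N%:R <= a -> a < 1 ->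
  0 < Pd N d a.
Proof.
move=> dN da a1; have N0 : (0 < N)%N by lia.
have Nr : 0 < (N%:R : R) by rewrite ltr0n.
have a0 : 0 <= a by apply: le_trans da; rewrite divr_ge0.
rewrite /Pd; apply: mulr_gt0; last by rewrite exprn_gt0 //; lra.
case: d dN da => [|d] dN da; first by rewrite expr0.
rewrite exprn_gt0 //; apply: lt_le_trans da; rewrite divr_gt0 // ltr0n.
Qed.

Lemma Pd_strict {R : realType} N d (a b : R) : (d < N)%N -> d%:R / N%:R <= a -> a < b -> b <= 1 ->
  Pd N d b < Pd N d a.
Proof.
move=> dN da ab b1; have N0 : (0 < N)%N by lia.
have Nr : 0 < (N%:R : R) by rewrite ltr0n.
have a0 : 0 <= a by apply: le_trans da; rewrite divr_ge0.
have a1 : a < 1 by lra.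
have Pa := Pd_gt0 dN da a1.
have [->|b1'] := eqVneq b 1.
  have e : (N - d)%N = (N - d).-1.+1 by lia.
  by rewrite /Pd subrr e expr0n /= mulr0 -e.
have b1s : b < 1 by rewrite lt_neqAle b1' b1.
case: d dN da Pa => [|d] dN da Pa.
  rewrite /Pd !expr0 !mul1r subn0 ltrXn2r //; [lia | lra | lra].
have a0' : 0 < a.
  by apply: lt_le_trans da; rewrite divr_gt0 // ltr0n.
have Pb : 0 < Pd N d.+1 b by apply: (Pd_gt0 dN) => //; lra.
rewrite -ltr_ln ?posrE // /Pd !lnM ?posrE ?exprn_gt0 //; try lra.
rewrite !lnXn //; try lra.
set u := ln b - ln a; set v := ln (1 - b) - ln (1 - a).
have hu : a * u <= b - a.
  have := ln_le_sub1 (divr_gt0 (lt_trans a0' ab) a0').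
  rewrite ln_div ?posrE -/u; try lra.
  move=> h; have : a * u <= a * (b / a - 1) by rewrite ler_pM2l.
  have -> : a * (b / a - 1) = b - a by field; rewrite gt_eqF.
  by [].
have hv : (1 - a) * v < a - b.
  have p1 : 0 < 1 - a by lra.
  have p2 : 0 < 1 - b by lra.
  have ne : (1 - b) / (1 - a) != 1.
    apply/negP => /eqP h; move: h => /(congr1 (fun z => z * (1 - a))).
    rewrite mul1r -mulrA mulVf ?gt_eqF // mulr1; lra.
  have := ln_lt_sub1 (divr_gt0 p2 p1) ne.
  rewrite ln_div ?posrE -/v //.
  move=> h; have : (1 - a) * v < (1 - a) * ((1 - b) / (1 - a) - 1) by rewrite ltr_pM2l.
  have -> : (1 - a) * ((1 - b) / (1 - a) - 1) = a - b by field; rewrite gt_eqF.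
  by [].
have hD : (d.+1)%:R * (1 - a) <= (N - d.+1)%:R * a.
  rewrite natrB; last by lia.
  rewrite ler_pdivrMr // in da.
  move: da; clear; move=> da.
  by rewrite mulrBr mulrBl mulr1 [_ * a]mulrC lerD2r mulrC.
have M0 : 0 < (N - d.+1)%:R :> R by rewrite ltr0n subn_gt0.
have K := key (ler0n R d.+1) M0 a0' a1 ab hu hv hD.
rewrite -subr_lt0.
suff -> : (ln b *+ d.+1 + ln (1 - b) *+ (N - d.+1)) - (ln a *+ d.+1 + ln (1 - a) *+ (N - d.+1))
   = d.+1%:R * u + (N - d.+1)%:R * v by [].
rewrite /u /v; ring.
Qed.

Definition Aterm {R : realType} (N : nat) (xi Rt : R) (d : nat) (t : R) : \bar R :=
  (lnE (Pd N d t) * (N%:R^-1)%:E + (xi * Er Rt t)%:E)%E.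

Definition Fd {R : realType} (N : nat) (xi Rt : R) (d : nat) : \bar R :=
  ereal_sup [set Aterm N xi Rt d t | t in `[(0:R), 1]].

Lemma Aterm0 {R : realType} N (xi Rt : R) d t : (0 < N)%N -> Pd N d t = 0 -> Aterm N xi Rt d t = -oo%E.
Proof. by move=> N0 h; rewrite /Aterm /lnE h eqxx gt0_mulNye ?addNye // lte_fin invr_gt0 ?ltr0n. Qed.

Lemma AtermE {R : realType} N (xi Rt : R) d t : 0 < Pd N d t ->
  Aterm N xi Rt d t = (ln (Pd N d t) * N%:R^-1 + xi * Er Rt t)%:E.
Proof. by move=> h; rewrite /Aterm /lnE gt_eqF. Qed.

Lemma Acmp {R : realType} N (xi Rt : R) d d' (t t' k : R) : (0 < N)%N -> 0 <= xi -> 0 < k ->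
  0 <= Pd N d' t -> Pd N d' t <= k * Pd N d t' -> Er Rt t <= Er Rt t' ->
  (Aterm N xi Rt d' t <= Aterm N xi Rt d t' + (ln k / N%:R)%:E)%E.
Proof.
move=> N0 xi0 k0 P0 hP hE.
have [h|h] := eqVneq (Pd N d' t) 0; first by rewrite Aterm0 // leNye.
have P'0 : 0 < Pd N d' t by rewrite lt_neqAle eq_sym h P0.
have P1 : 0 < Pd N d t'.
  have : 0 < k * Pd N d t' by apply: lt_le_trans hP.
  by rewrite pmulr_rgt0.
rewrite !AtermE // -EFinD lee_fin.
have hl : ln (Pd N d' t) <= ln k + ln (Pd N d t').
  by rewrite -lnM ?posrE // ler_ln ?posrE // mulr_gt0.
have w0 : 0 < (N%:R : R)^-1 by rewrite invr_gt0 ltr0n.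
have e1 : ln (Pd N d' t) * N%:R^-1 <= (ln k + ln (Pd N d t')) * N%:R^-1 by rewrite ler_pM2r.
have e2 : xi * Er Rt t <= xi * Er Rt t' by rewrite ler_wpM2l.
move: e1 e2; rewrite mulrDl.
set A := ln (Pd N d' t) * _; set B := ln k * _; set C := ln (Pd N d t') * _.
move=> e1 e2; clear -e1 e2; lra.
Qed.

Lemma Aterm_ub {R : realType} N (xi Rt : R) d t : (0 < N)%N -> 0 <= xi -> 0 <= Rt -> 0 <= t <= 1 ->
  (Aterm N xi Rt d t <= (xi * ln 2)%:E)%E.
Proof.
move=> N0 xi0 R0 ht.
have [h|h] := eqVneq (Pd N d t) 0; first by rewrite Aterm0 // leNye.
have P0 : 0 < Pd N d t by rewrite lt_neqAle eq_sym h Pd_ge0.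
rewrite AtermE // lee_fin.
have w0 : 0 < (N%:R : R)^-1 by rewrite invr_gt0 ltr0n.
have e1 : ln (Pd N d t) * N%:R^-1 <= 0 by rewrite pmulr_lle0 //; apply: ln_le0; apply: Pd_le1.
have e2 : xi * Er Rt t <= xi * ln 2 by rewrite ler_wpM2l // Er_le.
lra.
Qed.

Lemma Fd_fin {R : realType} N (xi Rt : R) d (t0 : R) : (0 < N)%N -> 0 <= xi -> 0 <= Rt -> 0 <= t0 <= 1 ->
  0 < Pd N d t0 -> Fd N xi Rt d \is a fin_num.
Proof.
move=> N0 xi0 R0 ht P0.
have lb : (Aterm N xi Rt d t0 <= Fd N xi Rt d)%E by apply: ereal_sup_ubound; exists t0 => //; rewrite /= in_itv.
have ub : (Fd N xi Rt d <= (xi * ln 2)%:E)%E.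
  by apply: ge_ereal_sup => _ [t ht' <-]; apply: Aterm_ub => //; move: ht'; rewrite /= in_itv.
rewrite AtermE // in lb.
by rewrite fin_numElt (lt_le_trans _ lb) ?ltNyr // (le_lt_trans ub) ?ltry.
Qed.

Lemma Pd_half {R : realType} N d d' (t : R) : (d <= d')%N -> (d' <= N)%N -> 0 <= t -> t <= 2^-1 ->
  Pd N d' t <= Pd N d t.
Proof.
move=> dd dN t0 t2.
have t1 : t < 1 by lra.
apply: le_trans (Pd_margin dd dN t0 (lexx t) t1) _.
apply: ler_piMl; first by apply: Pd_ge0; apply/andP; split; lra.
apply: exprn_ile1; first by rewrite divr_ge0 //; lra.
rewrite ler_pdivrMr; lra.
Qed.

Lemma in01 {R : realType} (t : R) : 0 <= t -> t <= 1 -> `[(0:R), 1]%classic t.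
Proof. by move=> t0 t1; rewrite /= in_itv /= t0 t1. Qed.

Lemma Aterm_le_Fd {R : realType} N (xi Rt : R) d (t : R) : 0 <= t -> t <= 1 ->
  (Aterm N xi Rt d t <= Fd N xi Rt d)%E.
Proof. by move=> t0 t1; apply: ereal_sup_ubound; exists t => //; apply: in01. Qed.

Lemma Fd_strict {R : realType} N (xi Rt : R) d d' : (0 < N)%N -> 0 <= xi -> 0 <= Rt ->
  (d < d')%N -> (d' + d' <= N)%N -> (Fd N xi Rt d' < Fd N xi Rt d)%E.
Proof.
move=> N0 xi0 R0 dd dN.
have Nr : 0 < (N%:R : R) by rewrite ltr0n.
set de : R := d%:R / N%:R.
have de0 : 0 <= de by rewrite divr_ge0.
have de2 : de < 2^-1.
  have : ((d + d)%:R : R) < N%:R by rewrite ltr_nat; lia.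
  rewrite natrD /de ltr_pdivrMr //; lra.
set s : R := (de + 2^-1) / 2.
have ds : de < s by rewrite /s; lra.
have s2 : s < 2^-1 by rewrite /s; lra.
have s0 : 0 < s by lra.
have s1 : s < 1 by lra.
have dN' : (d < N)%N by lia.
have d'N : (d' <= N)%N by lia.
have Pde := Pd_gt0 dN' (lexx de) (_ : de < 1).
have Ps := Pd_gt0 dN' (ltW ds) s1.
have Pde' : 0 < Pd N d de by apply: Pde; lra.
set k1 : R := (s / (1 - s)) ^+ (d' - d).
have k10 : 0 < k1 by rewrite exprn_gt0 // divr_gt0 //; lra.
have k11 : k1 < 1.
  rewrite /k1 exprn_ilt1 ?divr_ge0 //; try lra.
  - by rewrite subn_eq0 -ltnNge.
  - rewrite ltr_pdivrMr; lra.
set k2 : R := Pd N d s / Pd N d de.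
have k20 : 0 < k2 by rewrite divr_gt0.
have k21 : k2 < 1 by rewrite ltr_pdivrMr // mul1r; apply: Pd_strict => //; lra.
set m : R := Num.max (ln k1) (ln k2).
have m0 : m < 0 by rewrite /m gt_max !ln_lt0 ?k10 ?k11 ?k20 ?k21.
have mN : (ln k1 / N%:R <= m / N%:R) /\ (ln k2 / N%:R <= m / N%:R).
  by split; rewrite ler_pM2r ?invr_gt0 // /m le_max lexx ?orbT.
have half : forall t : R, 0 <= t -> t <= 2^-1 ->
    (Aterm N xi Rt d' t <= Fd N xi Rt d + (m / N%:R)%:E)%E.
  move=> t t0 t2.
  have [ts|st] := leP t s.
    apply: le_trans (Acmp (d:=d) (t':=t) N0 xi0 k10 _ _ (lexx _)) _.
    - by apply: Pd_ge0; apply/andP; split; lra.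
    - exact: Pd_margin (ltnW dd) d'N t0 ts s1.
    apply: leeD; first by apply: Aterm_le_Fd; lra.
    by rewrite lee_fin; case: mN.
  apply: le_trans (Acmp (d:=d) (t':=de) N0 xi0 k20 _ _ _) _.
  - by apply: Pd_ge0; apply/andP; split; lra.
  - rewrite /k2 mulfVK ?gt_eqF //.
    apply: le_trans (Pd_half (ltnW dd) d'N t0 t2) _.
    by apply: ltW; apply: Pd_strict => //; rewrite -/de; lra.
  - by apply: Er_mono => //; lra.
  apply: leeD; first by apply: Aterm_le_Fd; lra.
  by rewrite lee_fin; case: mN.
have all : forall t : R, 0 <= t -> t <= 1 ->
    (Aterm N xi Rt d' t <= Fd N xi Rt d + (m / N%:R)%:E)%E.
  move=> t t0 t1.
  have [t2|t2] := leP t 2^-1; first exact: half.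
  apply: le_trans (Acmp (d:=d') (t':=1 - t) N0 xi0 ltr01 _ _ _) _.
  - by apply: Pd_ge0; apply/andP; split; lra.
  - rewrite mul1r; apply: Pd_refl => //; apply/andP; split; lra.
  - by rewrite Er_sym.
  rewrite ln1 mul0r adde0; apply: half; lra.
have ub : (Fd N xi Rt d' <= Fd N xi Rt d + (m / N%:R)%:E)%E.
  apply: ge_ereal_sup => _ [t ht <-]; move: ht; rewrite /= in_itv /= => /andP[t0 t1].
  exact: all.
have hde : 0 <= de <= 1 by apply/andP; split; lra.
have fin := Fd_fin N0 xi0 R0 hde Pde'.
move: ub fin; case: (Fd N xi Rt d) => [r| |] //.
move=> ub _; apply: le_lt_trans ub _; rewrite -EFinD lte_fin.
have : m / N%:R < 0 by rewrite pmulr_llt0 // invr_gt0.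
lra.
Qed.

Lemma fmm_Fd {R : realType} N (xi Rt : R) (x y : word N) :
  fmm xi Rt x y = Fd N xi Rt (hamming x y).
Proof. by []. Qed.

Lemma hamming_le N (x y : word N) : (hamming x y <= N)%N.
Proof. by rewrite /hamming; apply: leq_trans (max_card _) _; rewrite card_ord. Qed.

Lemma Fd_sym {R : realType} N (xi Rt : R) d : (d <= N)%N -> Fd N xi Rt d = Fd N xi Rt (N - d).
Proof.
move=> dN.
have E : forall t : R, Aterm N xi Rt d t = Aterm N xi Rt (N - d) (1 - t).
  by move=> t; rewrite /Aterm (@Pd_sym R N d t dN) Er_sym.
apply/le_anti/andP; split; apply: ge_ereal_sup => _ [t ht <-]; move: ht; rewrite /= in_itv /= => /andP[t0 t1].
- rewrite E; apply: Aterm_le_Fd; lra.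
- have -> : Aterm N xi Rt (N - d) t = Aterm N xi Rt d (1 - t) by rewrite E subKr.
  apply: Aterm_le_Fd; lra.
Qed.

Lemma Fd_min {R : realType} N (xi Rt : R) d : (d <= N)%N -> Fd N xi Rt d = Fd N xi Rt (minn d (N - d)).
Proof.
move=> dN; case: (leqP d (N - d)) => h //.
exact: Fd_sym.
Qed.

Lemma Fd_core {R : realType} N (xi Rt : R) m1 m2 : (0 < N)%N -> 0 <= xi -> 0 <= Rt ->
  (m1 + m1 <= N)%N -> (m2 + m2 <= N)%N ->
  (Fd N xi Rt m2 <= Fd N xi Rt m1)%E <-> (m1 <= m2)%N.
Proof.
move=> N0 xi0 R0 h1 h2; split.
  move=> H; rewrite leqNgt; apply/negP => lt.
  have := Fd_strict N0 xi0 R0 lt h1; rewrite ltNge H //.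
rewrite leq_eqVlt => /orP[/eqP->//|lt].
exact/ltW/(Fd_strict N0 xi0 R0 lt h2).
Qed.

Lemma rhodistE {R : realType} N (x y : word N) : (0 < N)%N ->
  rhodist R x y = (minn (hamming x y) (N - hamming x y))%:R / N%:R.
Proof.
move=> N0; have hN := hamming_le x y.
have Nr : (N%:R : R) != 0 by rewrite pnatr_eq0 -lt0n.
have e : 1 - reldist R x y = (N - hamming x y)%:R / N%:R.
  by rewrite /reldist natrB // mulrBl mulfV.
rewrite /rhodist e /reldist.
case: (leqP (hamming x y) (N - hamming x y)) => h.
  apply/min_idPl.
  by rewrite ler_pM2r ?invr_gt0 ?ltr0n // ler_nat.
apply/min_idPr.
by rewrite ler_pM2r ?invr_gt0 ?ltr0n // ler_nat ltnW.
Qed.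

Unset Implicit Arguments.
Set Strict Implicit.

Theorem mainTheorem6 (R : realType) (N : nat) (xi Rt : R) :
  (0 < N)%N -> 0 <= xi <= 1 -> 0 <= Rt ->
  (forall y x1 x2 : word N,
      (fmm xi Rt x2 y <= fmm xi Rt x1 y)%E <-> rhodist R x1 y <= rhodist R x2 y) /\
  (forall (C : seq (word N)) (y x : word N), x \in C ->
      (forall x', x' \in C -> (fmm xi Rt x' y <= fmm xi Rt x y)%E) <->
      (forall x', x' \in C -> rhodist R x y <= rhodist R x' y)).
Proof.
move=> N0 /andP[xi0 _] R0.
have P1 : forall y x1 x2 : word N,
    (fmm xi Rt x2 y <= fmm xi Rt x1 y)%E <-> rhodist R x1 y <= rhodist R x2 y.
  move=> y x1 x2.
  rewrite !fmm_Fd !rhodistE // (Fd_min xi Rt (hamming_le x1 y)) (Fd_min xi Rt (hamming_le x2 y)).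
  rewrite ler_pM2r ?invr_gt0 ?ltr0n // ler_nat.
  by apply: Fd_core => //; lia.
split => // C y x _; split => H x' hx'; apply/P1; exact: H.
Qed.
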